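(* Let $\lambda\geqslant\omega$ be a cardinal and $n$ a positive integer, and let $\mathscr{I}_\lambda^n$ carry any Hausdorff topology making it a topological semigroup. Let $S$ be a topological semigroup such that $S\times S$ is countably compact. Then every continuous homomorphism $h\colon\mathscr{I}_\lambda^n\to S$ is annihilating, i.e. $(s)h=(t)h$ for all $s,t\in\mathscr{I}_\lambda^n$.
   Context: A topological semigroup is a Hausdorff space with a continuous associative multiplication. For a set $X$ of cardinality $\lambda$, $\mathscr{I}(X)$ is the semigroup of all partial one-to-one maps of $X$ (including the empty map) under composition $x(\alpha\beta)=(x\alpha)\beta$ on $\operatorname{dom}(\alpha\beta)=\{y\in\operatorname{dom}\alpha: y\alpha\in\operatorname{dom}\beta\}$; the rank of $\alpha$ is $|\operatorname{ran}\alpha|$, and $\mathscr{I}_\lambda^n=\{\alpha\in\mathscr{I}(X):\operatorname{rank}\alpha\leqslant n\}$. A homomorphism is annihilating if it is constant. $\omega$ is the first infinite cardinal. *)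

(* Defs.v *)
From Stdlib Require Import List Arith Lia.
Set Implicit Arguments.

Definition is_topology {T : Type} (op : (T -> Prop) -> Prop) : Prop :=
  op (fun _ => True) /\
  (forall U V, op U -> op V -> op (fun x => U x /\ V x)) /\
  (forall F : (T -> Prop) -> Prop,
      (forall U, F U -> op U) -> op (fun x => exists U, F U /\ U x)).

Definition hausdorff {T : Type} (op : (T -> Prop) -> Prop) : Prop :=
  forall x y : T, x <> y ->
    exists U V, op U /\ op V /\ U x /\ V y /\ (forall z, ~ (U z /\ V z)).

Definition prod_top {A B : Type} (opA : (A -> Prop) -> Prop)
  (opB : (B -> Prop) -> Prop) : (A * B -> Prop) -> Prop :=
  fun W => forall p, W p ->
    exists U V, opA U /\ opB V /\ U (fst p) /\ V (snd p) /\
      (forall a b, U a -> V b -> W (a, b)).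

Definition continuous {A B : Type} (opA : (A -> Prop) -> Prop)
  (opB : (B -> Prop) -> Prop) (f : A -> B) : Prop :=
  forall V, opB V -> opA (fun x => V (f x)).

Definition countably_compact {T : Type} (op : (T -> Prop) -> Prop) : Prop :=
  forall U : nat -> T -> Prop,
    (forall k, op (U k)) -> (forall x, exists k, U k x) ->
    exists N, forall x, exists k, k <= N /\ U k x.

Definition topological_semigroup {T : Type} (mul : T -> T -> T)
  (op : (T -> Prop) -> Prop) : Prop :=
  is_topology op /\ hausdorff op /\
  (forall x y z, mul x (mul y z) = mul (mul x y) z) /\
  continuous (prod_top op op) op (fun p => mul (fst p) (snd p)).

(* Partial one-to-one maps of X: x is in the domain iff pmap x = Some _. *)
Record pinj (X : Type) := Pinj {
  pmap : X -> option X;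
  pmap_inj : forall x y z, pmap x = Some z -> pmap y = Some z -> x = y
}.

Definition rank_le {X : Type} (a : pinj X) (n : nat) : Prop :=
  exists l : list X, length l <= n /\
    (forall x y, pmap a x = Some y -> In y l).

(* I_lambda^n where lambda = |X|. *)
Definition In_n (X : Type) (n : nat) := { a : pinj X | rank_le a n }.

Definition comp_map {X : Type} (a b : X -> option X) : X -> option X :=
  fun x => match a x with Some y => b y | None => None end.

Lemma comp_map_inj {X : Type} (a b : pinj X) :
  forall x y z, comp_map (pmap a) (pmap b) x = Some z ->
                comp_map (pmap a) (pmap b) y = Some z -> x = y.
Proof.
  intros x y z; unfold comp_map.
  destruct (pmap a x) as [u|] eqn:Hu; [|discriminate].
  destruct (pmap a y) as [v|] eqn:Hv; [|discriminate].
  intros H1 H2.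
  assert (u = v) by (eapply (pmap_inj b); eauto). subst v.
  eapply (pmap_inj a); eauto.
Qed.

Definition pcomp {X : Type} (a b : pinj X) : pinj X :=
  @Pinj X (comp_map (pmap a) (pmap b)) (comp_map_inj a b).

Lemma pcomp_rank {X : Type} (n : nat) (a b : pinj X) :
  rank_le b n -> rank_le (pcomp a b) n.
Proof.
  intros [l [Hl Hin]]. exists l; split; auto.
  intros x y; simpl; unfold comp_map.
  destruct (pmap a x) as [u|]; [|discriminate]. apply Hin.
Qed.

(* Composition (x)(alpha beta) = ((x)alpha)beta in I_lambda^n. *)
Definition In_mul {X : Type} {n : nat} (s t : In_n X n) : In_n X n :=
  exist _ (pcomp (proj1_sig s) (proj1_sig t))
        (pcomp_rank (proj1_sig s) (proj2_sig t)).

(* Main.v *)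
Require Import Defs.
From Stdlib Require Import List Arith.
From Stdlib Require Import Lia Classical ClassicalEpsilon FunctionalExtensionality ProofIrrelevance.

Lemma haus_eq {S : Type} (tauS : (S -> Prop) -> Prop) (x y : S) :
  hausdorff tauS -> (forall W, tauS W -> W x -> W y) -> x = y.
Proof.
  intros Hh H. destruct (classic (x = y)) as [E|E]; auto. exfalso.
  destruct (Hh x y E) as [U [V [HU [HV [Ux [Vy Hd]]]]]].
  apply (Hd y); split; [apply H|]; auto.
Qed.

Lemma cluster {S : Type} (tauS : (S -> Prop) -> Prop)
  (HSS : countably_compact (prod_top tauS tauS)) (u : nat -> S * S) :
  exists pt, forall W, prod_top tauS tauS W -> W pt ->
     forall m, exists k, m <= k /\ W (u k).
Proof.
  apply NNPP; intro Hno.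
  set (U := fun m pt => exists W, prod_top tauS tauS W /\ W pt /\
                         forall k, m <= k -> ~ W (u k)).
  destruct (HSS U) as [N HN].
  - intros m pt [W [HW [Wpt Hk]]].
    destruct (HW pt Wpt) as [U0 [V0 [HU [HV [Hu [Hv Hsub]]]]]].
    exists U0, V0; repeat split; auto.
    intros a b Ha Hb. exists W; split; [|split]; auto.
  - intro pt. apply NNPP; intro H. apply Hno. exists pt.
    intros W HW Wpt m. apply NNPP; intro Hn. apply H. exists m, W.
    split; [auto|split; [auto|]]. intros k Hk Wk. apply Hn. exists k; auto.
  - destruct (HN (u N)) as [k [Hk [W [_ [Wu Hn]]]]].
    apply (Hn N); auto.
Qed.

Lemma topo {S : Type} (mulS : S -> S -> S) (tauS : (S -> Prop) -> Prop)
  (HS : topological_semigroup mulS tauS)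
  (HSS : countably_compact (prod_top tauS tauS))
  (A B : nat -> S) (s z : S)
  (H1 : forall k, mulS (A k) (B k) = s)
  (H2 : forall j k, j <> k -> mulS (A k) (B j) = z) : s = z.
Proof.
  destruct HS as [Htop [Hh [_ Hc]]].
  destruct Htop as [Hfull _].
  destruct (cluster tauS HSS (fun k => (A k, B k))) as [[p q] Hcl].
  assert (C1 : mulS p q = s).
  { apply (haus_eq tauS); auto. intros W HW Wpq.
    destruct (Hcl _ (Hc W HW) Wpq 0) as [k [_ Hk]]. simpl in Hk.
    rewrite H1 in Hk; auto. }
  assert (C2 : forall j, mulS p (B j) = z).
  { intro j. apply (haus_eq tauS); auto. intros W HW Wp.
    destruct (Hc W HW (p, B j) Wp) as [U0 [V0 [HU [HV [Up [Vb Hsub]]]]]].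
    assert (HW' : prod_top tauS tauS (fun pt => U0 (fst pt))).
    { intros pt Hpt. exists U0, (fun _ => True). repeat split; auto. }
    destruct (Hcl _ HW' Up (Datatypes.S j)) as [k [Hk Uk]]. simpl in Uk.
    pose proof (Hsub _ _ Uk Vb) as Hw. simpl in Hw.
    rewrite H2 in Hw; auto. lia. }
  assert (C3 : mulS p q = z).
  { apply (haus_eq tauS); auto. intros W HW Wp.
    destruct (Hc W HW (p, q) Wp) as [U0 [V0 [HU [HV [Up [Vq Hsub]]]]]].
    assert (HW' : prod_top tauS tauS (fun pt => V0 (snd pt))).
    { intros pt Hpt. exists (fun _ => True), V0. repeat split; auto. }
    destruct (Hcl _ HW' Vq 0) as [k [_ Vk]]. simpl in Vk.
    pose proof (Hsub _ _ Up Vk) as Hw. simpl in Hw.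
    rewrite C2 in Hw; auto. }
  congruence.
Qed.

Definition eqd {X : Type} (x y : X) : {x = y} + {x <> y} :=
  excluded_middle_informative (x = y).

Fixpoint idx {X : Type} (y : X) (l : list X) : nat :=
  match l with
  | nil => 0
  | x :: l' => if eqd x y then 0 else S (idx y l')
  end.

Lemma idx_lt {X : Type} (y : X) l : In y l -> idx y l < length l.
Proof.
  induction l as [|a l IH]; simpl; [tauto|].
  intros [H|H]; destruct (eqd a y); try lia.
  - congruence.
  - specialize (IH H); lia.
Qed.

Lemma idx_inj {X : Type} (y y' : X) l :
  In y l -> In y' l -> idx y l = idx y' l -> y = y'.
Proof.
  induction l as [|a l IH]; simpl; [tauto|].
  intros Hy Hy'. destruct (eqd a y) as [e|e]; destruct (eqd a y') as [e'|e'];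
    try discriminate; intro E.
  - congruence.
  - destruct Hy as [Hy|Hy]; [congruence|].
    destruct Hy' as [Hy'|Hy']; [congruence|].
    apply IH; auto.
Qed.

Definition cc {X : Type} (f : nat -> X) (l : list X) (k : nat) (y : X) : X :=
  f (k * S (length l) + idx y l).

Lemma cc_inj {X : Type} (f : nat -> X) (finj : forall i j, f i = f j -> i = j)
  l k j y y' : In y l -> In y' l -> cc f l k y = cc f l j y' -> k = j /\ y = y'.
Proof.
  unfold cc; intros Hy Hy' E. apply finj in E.
  pose proof (idx_lt y l Hy). pose proof (idx_lt y' l Hy').
  set (m := S (length l)) in *. set (i := idx y l) in *. set (i' := idx y' l) in *.
  assert (k = j).
  { destruct (lt_eq_lt_dec k j) as [[Hlt|Heq]|Hlt]; auto.
    - assert (S k * m <= j * m) by (apply Nat.mul_le_mono_r; lia).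
      simpl in *; lia.
    - assert (S j * m <= k * m) by (apply Nat.mul_le_mono_r; lia).
      simpl in *; lia. }
  subst j. split; auto. apply idx_inj with l; auto. subst i i'; lia.
Qed.

Definition amap {X : Type} (f : nat -> X) (l : list X) (s0 : pinj X) (k : nat)
  : X -> option X :=
  fun x => match pmap s0 x with Some y => Some (cc f l k y) | None => None end.

Lemma amap_inj {X : Type} (f : nat -> X) (finj : forall i j, f i = f j -> i = j)
  (l : list X) (s0 : pinj X) (Hin : forall x y, pmap s0 x = Some y -> In y l) k :
  forall x y z, amap f l s0 k x = Some z -> amap f l s0 k y = Some z -> x = y.
Proof.
  unfold amap; intros x y z.
  destruct (pmap s0 x) as [u|] eqn:Eu; [|discriminate].
  destruct (pmap s0 y) as [v|] eqn:Ev; [|discriminate].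
  intros H1 H2. injection H1; injection H2; intros; subst.
  destruct (cc_inj f finj l k k u v (Hin _ _ Eu) (Hin _ _ Ev)) as [_ ->]; auto.
  eapply (pmap_inj s0); eauto.
Qed.

Definition bmap {X : Type} (f : nat -> X) (l : list X) (k : nat) (w : X) : option X :=
  match excluded_middle_informative (exists y, In y l /\ cc f l k y = w) with
  | left H => Some (proj1_sig (constructive_indefinite_description _ H))
  | right _ => None
  end.

Lemma bmap_spec {X : Type} (f : nat -> X) l k w y :
  bmap f l k w = Some y -> In y l /\ cc f l k y = w.
Proof.
  unfold bmap. destruct (excluded_middle_informative _) as [H|H]; [|discriminate].
  destruct (constructive_indefinite_description _ H) as [y' Hy']; simpl.
  intro E; injection E; intro; subst; auto.
Qed.

Lemma bmap_inj {X : Type} (f : nat -> X) l k :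
  forall x y z, bmap f l k x = Some z -> bmap f l k y = Some z -> x = y.
Proof.
  intros x y z H1 H2. apply bmap_spec in H1. apply bmap_spec in H2.
  destruct H1, H2; congruence.
Qed.

Lemma bmap_cc {X : Type} (f : nat -> X) (finj : forall i j, f i = f j -> i = j)
  l k y : In y l -> bmap f l k (cc f l k y) = Some y.
Proof.
  intro Hy. unfold bmap. destruct (excluded_middle_informative _) as [H|H].
  - destruct (constructive_indefinite_description _ H) as [y' [Hy' E]]; simpl.
    destruct (cc_inj f finj l k k y' y Hy' Hy E) as [_ ->]; auto.
  - exfalso; apply H; exists y; auto.
Qed.

Lemma bmap_other {X : Type} (f : nat -> X) (finj : forall i j, f i = f j -> i = j)
  l j k y : In y l -> j <> k -> bmap f l j (cc f l k y) = None.
Proof.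
  intros Hy Hjk. destruct (bmap f l j (cc f l k y)) as [y'|] eqn:E; auto.
  apply bmap_spec in E. destruct E as [Hy' E].
  destruct (cc_inj f finj l j k y' y Hy' Hy E); contradiction.
Qed.

Lemma pzero_inj (X : Type) : forall x y z : X,
  (fun _ : X => @None X) x = Some z -> (fun _ : X => @None X) y = Some z -> x = y.
Proof. intros; discriminate. Qed.

Definition pzero (X : Type) : pinj X := @Pinj X (fun _ => None) (pzero_inj X).

Lemma pzero_rank (X : Type) n : rank_le (pzero X) n.
Proof. exists nil; split; simpl; [lia|]. intros; discriminate. Qed.

Definition In_zero (X : Type) (n : nat) : In_n X n := exist _ (pzero X) (pzero_rank X n).

Lemma In_eq {X : Type} {n : nat} (s t : In_n X n) :
  (forall x, pmap (proj1_sig s) x = pmap (proj1_sig t) x) -> s = t.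
Proof.
  destruct s as [[ps Hps] Rs], t as [[pt Hpt] Rt]; simpl; intro E.
  assert (ps = pt) by (apply functional_extensionality; auto). subst pt.
  rewrite (proof_irrelevance _ Hps Hpt) in *.
  rewrite (proof_irrelevance _ Rs Rt). reflexivity.
Qed.

Lemma split_elem (X : Type) (f : nat -> X) (finj : forall i j, f i = f j -> i = j)
  (n : nat) (s : In_n X n) :
  exists a b : nat -> In_n X n,
    (forall k, In_mul (a k) (b k) = s) /\
    (forall j k, j <> k -> In_mul (a k) (b j) = In_zero X n).
Proof.
  destruct s as [s0 Hs]. pose proof Hs as [l [Hl Hin]].
  assert (Ra : forall k, rank_le (Pinj (amap f l s0 k) (amap_inj f finj l s0 Hin k)) n).
  { intro k. exists (map (cc f l k) l). rewrite length_map. split; auto.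
    simpl; unfold amap; intros x y.
    destruct (pmap s0 x) as [u|] eqn:Eu; [|discriminate].
    intro E; injection E; intro; subst. apply in_map; eauto. }
  assert (Rb : forall k, rank_le (Pinj (bmap f l k) (bmap_inj f l k)) n).
  { intro k. exists l. split; auto. simpl. intros x y E.
    apply bmap_spec in E; tauto. }
  exists (fun k => exist (fun a => rank_le a n) _ (Ra k)), (fun k => exist (fun a => rank_le a n) _ (Rb k)). split.
  - intro k. apply In_eq. intro x. simpl. unfold comp_map, amap.
    destruct (pmap s0 x) as [u|] eqn:Eu; auto.
    apply bmap_cc; eauto.
  - intros j k Hjk. apply In_eq. intro x. simpl. unfold comp_map, amap.
    destruct (pmap s0 x) as [u|] eqn:Eu; auto.
    apply bmap_other; eauto.
Qed.

Theorem theorem8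
  (X : Type)
  (HX : exists f : nat -> X, forall i j, f i = f j -> i = j)  (* |X| = lambda >= omega *)
  (n : nat) (Hn : 0 < n)
  (tau : (In_n X n -> Prop) -> Prop)
  (Htau : topological_semigroup (@In_mul X n) tau)
  (S : Type) (mulS : S -> S -> S) (tauS : (S -> Prop) -> Prop)
  (HS : topological_semigroup mulS tauS)
  (HSS : countably_compact (prod_top tauS tauS))
  (h : In_n X n -> S)
  (hhom : forall s t, h (In_mul s t) = mulS (h s) (h t))
  (hcont : continuous tau tauS h) :
  forall s t : In_n X n, h s = h t.
Proof.
  destruct HX as [f finj].
  assert (Hz : forall s, h s = h (In_zero X n)).
  { intro s. destruct (split_elem X f finj n s) as [a [b [H1 H2]]].
    apply (topo mulS tauS HS HSS (fun k => h (a k)) (fun k => h (b k))).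
    - intro k. rewrite <- hhom, H1; auto.
    - intros j k Hjk. rewrite <- hhom, H2; auto. }
  intros s t. rewrite (Hz s), (Hz t); reflexivity.
Qed.
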